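(* Let $\sum_{n=1}^{\infty}x_n$ be a divergent series of positive real terms with $\lim_{n\to\infty}x_n=0$. Then for every $x\geq 0$ there exists a permutation $\sigma$ of $\mathbb{N}$ such that the series $\sum_{n=1}^{\infty}(x_n-x_{\sigma(n)})$ converges and $\sum_{n=1}^{\infty}(x_n-x_{\sigma(n)})=x$.
   Context: $S_\infty$ denotes the set of all permutations (bijections) of $\mathbb{N}$. *)

(* Defs.v *)
From Stdlib Require Import Reals.
Open Scope R_scope.

Definition is_perm (s : nat -> nat) : Prop :=
  (forall m n, s m = s n -> m = n) /\ (forall k, exists n, s n = k).

(* Main.v *)
Require Import Defs.
From Stdlib Require Import Reals.
From Stdlib Require Import Lra Lia ClassicalEpsilon Classical.
Open Scope R_scope.


Fixpoint rs (f : nat -> R) (a l : nat) : R :=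
  match l with O => 0 | S l' => f a + rs f (S a) l' end.

Lemma rs_snoc f a l : rs f a (S l) = rs f a l + f (a + l)%nat.
Proof.
  revert a; induction l as [|l IH]; intro a.
  - simpl. rewrite Nat.add_0_r; ring.
  - change (rs f a (S (S l))) with (f a + rs f (S a) (S l)). rewrite IH.
    change (rs f a (S l)) with (f a + rs f (S a) l).
    replace (S a + l)%nat with (a + S l)%nat by lia. ring.
Qed.

Lemma rs_ext f g a l : (forall i, (a <= i < a + l)%nat -> f i = g i) -> rs f a l = rs g a l.
Proof.
  revert a; induction l as [|l IH]; intros a H; simpl; auto.
  rewrite (H a) by lia. rewrite (IH (S a)); auto. intros i Hi; apply H; lia.
Qed.

Lemma rs_minus f g a l : rs (fun k => f k - g k) a l = rs f a l - rs g a l.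
Proof.
  revert a; induction l as [|l IH]; intro a; simpl; [ring|]. rewrite IH; ring.
Qed.

Lemma rs_nonneg f a l : (forall i, 0 <= f i) -> 0 <= rs f a l.
Proof.
  intro H; revert a; induction l as [|l IH]; intro a; simpl; [lra|].
  specialize (H a); specialize (IH (S a)); lra.
Qed.

Lemma rs_le f g a l : (forall i, f i <= g i) -> rs f a l <= rs g a l.
Proof.
  intro H; revert a; induction l as [|l IH]; intro a; simpl; [lra|].
  specialize (H a); specialize (IH (S a)); lra.
Qed.

Lemma rs_split f a l m : rs f a (l + m) = rs f a l + rs f (a + l) m.
Proof.
  revert a; induction l as [|l IH]; intro a; simpl.
  - rewrite Nat.add_0_r; ring.
  - rewrite IH. replace (S a + l)%nat with (a + S l)%nat by lia. ring.
Qed.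

Lemma half_pos k : 0 < (1/2)^k.
Proof. apply pow_lt; lra. Qed.

Lemma half_decr a b : (a <= b)%nat -> (1/2)^b <= (1/2)^a.
Proof.
  intro H. replace b with (a + (b - a))%nat by lia. generalize (b - a)%nat as d.
  induction d as [|d IH].
  - rewrite Nat.add_0_r; lra.
  - replace (a + S d)%nat with (S (a + d)) by lia. simpl.
    pose proof (half_pos (a + d)). lra.
Qed.

Lemma rs_geom a l : rs (fun k => (1/2)^k) a l <= 2 * (1/2)^a.
Proof.
  revert a; induction l as [|l IH]; intro a; simpl.
  - pose proof (half_pos a); lra.
  - specialize (IH (S a)). simpl in IH. lra.
Qed.

Definition choose_nat (P : nat -> Prop) : nat :=
  match excluded_middle_informative (exists n, P n) with
  | left h => proj1_sig (constructive_indefinite_description P h)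
  | right _ => 0%nat
  end.

Lemma choose_spec (P : nat -> Prop) : (exists n, P n) -> P (choose_nat P).
Proof.
  intro h. unfold choose_nat. destruct (excluded_middle_informative _) as [h'|h'].
  - exact (proj2_sig (constructive_indefinite_description P h')).
  - contradiction.
Qed.

Record st := mk { sA : nat; sB : nat; sop : nat -> nat; sW : R }.

Section Constr.
Variable x : nat -> R.
Variable c : R.

Definition step (n : nat) (s : st) : st :=
  if Rlt_dec (sW s) c then
    mk (S (sA s)) (sB s) (fun k => if Nat.eqb k (sA s) then n else sop s k) (sW s + x n)
  else if Rle_dec (x n) ((1/2)^(sB s)) then
    mk (sA s) (S (sB s)) (sop s) (sW s - x (sop s (sB s)))
  else s.

Fixpoint stt (n : nat) : st :=
  match n with O => mk 0 0 (fun _ => 0%nat) 0 | S n => step n (stt n) end.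

Definition A n := sA (stt n).
Definition B n := sB (stt n).
Definition W n := sW (stt n).
Definition op n := sop (stt n).

Definition isOpen n := W n < c.
Definition isClose n := c <= W n /\ x n <= (1/2)^(B n).

Lemma step_spec n :
  (W n < c /\ A (S n) = S (A n) /\ B (S n) = B n /\ W (S n) = W n + x n /\
     op (S n) = (fun k => if Nat.eqb k (A n) then n else op n k))
  \/ (c <= W n /\ x n <= (1/2)^(B n) /\ A (S n) = A n /\ B (S n) = S (B n) /\
      W (S n) = W n - x (op n (B n)) /\ op (S n) = op n)
  \/ (c <= W n /\ (1/2)^(B n) < x n /\ A (S n) = A n /\ B (S n) = B n /\
      W (S n) = W n /\ op (S n) = op n).
Proof.
  unfold A, B, W, op; simpl; unfold step.
  destruct (Rlt_dec (sW (stt n)) c) as [h|h].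
  - left; simpl; repeat split; auto.
  - destruct (Rle_dec (x n) ((1/2)^(sB (stt n)))) as [h2|h2].
    + right; left; simpl; repeat split; auto; lra.
    + right; right; repeat split; auto; lra.
Qed.

Lemma A_step n : A (S n) = if Rlt_dec (W n) c then S (A n) else A n.
Proof.
  destruct (step_spec n) as [H|[H|H]]; destruct (Rlt_dec (W n) c); try lra; tauto.
Qed.

Lemma B_step n : B (S n) = if Rlt_dec (W n) c then B n else
   if Rle_dec (x n) ((1/2)^(B n)) then S (B n) else B n.
Proof.
  destruct (step_spec n) as [H|[H|H]]; destruct (Rlt_dec (W n) c); try lra; try tauto;
  destruct (Rle_dec (x n) ((1/2)^(B n))); try lra; tauto.
Qed.

Lemma A_mono n j : (A n <= A (n + j))%nat.
Proof.
  induction j; [rewrite Nat.add_0_r; lia|].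
  replace (n + S j)%nat with (S (n + j)) by lia. rewrite A_step.
  destruct (Rlt_dec _ _); lia.
Qed.

Lemma B_mono n j : (B n <= B (n + j))%nat.
Proof.
  induction j; [rewrite Nat.add_0_r; lia|].
  replace (n + S j)%nat with (S (n + j)) by lia. rewrite B_step.
  destruct (Rlt_dec _ _); [lia|]. destruct (Rle_dec _ _); lia.
Qed.

Lemma A_mono' n m : (n <= m)%nat -> (A n <= A m)%nat.
Proof. intro h; replace m with (n + (m - n))%nat by lia; apply A_mono. Qed.
Lemma B_mono' n m : (n <= m)%nat -> (B n <= B m)%nat.
Proof. intro h; replace m with (n + (m - n))%nat by lia; apply B_mono. Qed.

Lemma A_le n : (A n <= n)%nat.
Proof.
  induction n; [unfold A; simpl; lia|]. rewrite A_step. destruct (Rlt_dec _ _); lia.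
Qed.

Lemma open_unique n m : isOpen n -> isOpen m -> A n = A m -> n = m.
Proof.
  unfold isOpen; intros hn hm he.
  destruct (Nat.lt_trichotomy n m) as [h|[h|h]]; auto.
  - pose proof (A_mono' (S n) m h). rewrite A_step in H.
    destruct (Rlt_dec _ _); [lia|lra].
  - pose proof (A_mono' (S m) n h). rewrite A_step in H.
    destruct (Rlt_dec _ _); [lia|lra].
Qed.

Lemma close_unique n m : isClose n -> isClose m -> B n = B m -> n = m.
Proof.
  unfold isClose; intros hn hm he.
  destruct (Nat.lt_trichotomy n m) as [h|[h|h]]; auto.
  - pose proof (B_mono' (S n) m h). rewrite B_step in H.
    destruct (Rlt_dec _ _); [lra|]. destruct (Rle_dec _ _); [lia|lra].
  - pose proof (B_mono' (S m) n h). rewrite B_step in H.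
    destruct (Rlt_dec _ _); [lra|]. destruct (Rle_dec _ _); [lia|lra].
Qed.

Lemma open_exists n k : (k < A n)%nat -> exists m, isOpen m /\ A m = k.
Proof.
  induction n; intro h; [unfold A in h; simpl in h; lia|].
  destruct (Nat.lt_ge_cases k (A n)) as [h2|h2]; auto.
  rewrite A_step in h. unfold isOpen. destruct (Rlt_dec (W n) c).
  - exists n; split; auto; lia.
  - lia.
Qed.

Lemma close_exists n k : (k < B n)%nat -> exists m, isClose m /\ B m = k.
Proof.
  induction n; intro h; [unfold B in h; simpl in h; lia|].
  destruct (Nat.lt_ge_cases k (B n)) as [h2|h2]; auto.
  rewrite B_step in h. unfold isClose. destruct (Rlt_dec (W n) c); [lia|].
  destruct (Rle_dec (x n) _).
  - exists n; split; [split; [lra|auto]|lia].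
  - lia.
Qed.

Definition Op k := choose_nat (fun m => isOpen m /\ A m = k).
Definition Cl k := choose_nat (fun m => isClose m /\ B m = k).

Definition sigma n :=
  if Rlt_dec (W n) c then Cl (A n)
  else if Rle_dec (x n) ((1/2)^(B n)) then Op (B n) else n.

Hypothesis hpos : forall n, 0 < x n.
Hypothesis hc : 0 < c.

Definition Inv n := (B n <= A n)%nat /\ W n = rs (fun k => x (op n k)) (B n) (A n - B n) /\
  forall k, (k < A n)%nat -> isOpen (op n k) /\ A (op n k) = k.

Lemma inv_all n : Inv n.
Proof.
  induction n.
  - unfold Inv, A, B, W, op; simpl. split; [lia|]. split; [reflexivity|]. intros; lia.
  - destruct IHn as [h1 [h2 h3]].
    destruct (step_spec n) as [[s1 [s2 [s3 [s4 s5]]]]|[[s1 [s2 [s3 [s4 [s5 s6]]]]]|[s1 [s2 [s3 [s4 [s5 s6]]]]]]].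
    + unfold Inv. rewrite s2, s3, s4, s5. split; [lia|]. split.
      * replace (S (A n) - B n)%nat with (S (A n - B n)) by lia. rewrite rs_snoc.
        replace (B n + (A n - B n))%nat with (A n) by lia. rewrite Nat.eqb_refl.
        rewrite h2. f_equal. apply rs_ext. intros i hi.
        destruct (Nat.eqb_spec i (A n)); [lia|auto].
      * intros k hk. destruct (Nat.eqb_spec k (A n)).
        -- subst; split; auto.
        -- apply h3; lia.
    + assert (hBA : (B n < A n)%nat).
      { destruct (Nat.eq_dec (B n) (A n)) as [e|e]; [|lia].
        rewrite e, Nat.sub_diag in h2. simpl in h2. lra. }
      unfold Inv. rewrite s3, s4, s5, s6. split; [lia|]. split; auto.
      rewrite h2. replace (A n - B n)%nat with (S (A n - S (B n))) by lia. simpl. ring.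
    + unfold Inv. rewrite s3, s4, s5, s6. auto.
Qed.

Lemma W_nonneg n : 0 <= W n.
Proof.
  destruct (inv_all n) as [_ [h _]]. rewrite h. apply rs_nonneg. intro; left; auto.
Qed.

Lemma op_Op n k : (k < A n)%nat -> op n k = Op k.
Proof.
  intro hk. destruct (inv_all n) as [_ [_ h]]. destruct (h k hk) as [o1 o2].
  assert (hs : isOpen (Op k) /\ A (Op k) = k) by (unfold Op; apply choose_spec; exists (op n k); auto).
  symmetry; apply open_unique; [tauto|tauto|]. destruct hs; congruence.
Qed.

Lemma close_BA n : isClose n -> (B n < A n)%nat.
Proof.
  intros [h _]. destruct (inv_all n) as [h1 [h2 _]].
  destruct (Nat.eq_dec (B n) (A n)) as [e|e]; [|lia].
  rewrite e, Nat.sub_diag in h2. simpl in h2. lra.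
Qed.


Hypothesis hlim : Un_cv x 0.
Hypothesis hdiv : ~ exists l : R, Un_cv (fun N => sum_f_R0 x N) l.

Lemma x_small e : 0 < e -> exists N, forall n, (N <= n)%nat -> x n < e.
Proof.
  intro he. destruct (hlim e he) as [N HN]. exists N. intros n hn.
  specialize (HN n hn). unfold Rdist in HN. rewrite Rminus_0_r in HN.
  pose proof (hpos n). rewrite Rabs_right in HN by lra. lra.
Qed.

Lemma rs0_sum N : rs x 0 (S N) = sum_f_R0 x N.
Proof.
  induction N; [simpl; ring|]. rewrite rs_snoc, IHN. simpl. reflexivity.
Qed.

Lemma psum_unb K : exists N, K < rs x 0 N.
Proof.
  apply NNPP; intro H.
  assert (hb : forall N, sum_f_R0 x N <= K).
  { intro N. rewrite <- rs0_sum. apply Rnot_lt_le. intro h; apply H; eauto. }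
  apply hdiv.
  assert (hg : Un_growing (fun N => sum_f_R0 x N)).
  { intro n. simpl. pose proof (hpos (S n)); lra. }
  assert (hu : has_ub (fun N => sum_f_R0 x N)).
  { exists K. intros r [i ->]. apply hb. }
  destruct (growing_cv _ hg hu) as [l hl]. eauto.
Qed.

Lemma L_high m : exists i, (m <= i)%nat /\ c <= W i.
Proof.
  apply NNPP; intro H.
  assert (hlt : forall i, (m <= i)%nat -> W i < c).
  { intros i hi. apply Rnot_le_lt. intro h; apply H; eauto. }
  assert (hw : forall j, W (m + j)%nat = W m + rs x m j).
  { induction j. { rewrite Nat.add_0_r; simpl; ring. }
    replace (m + S j)%nat with (S (m + j)) by lia.
    destruct (step_spec (m + j)) as [[s1 [s2 [s3 [s4 s5]]]]|[[s1 _]|[s1 _]]].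
    - rewrite s4, IHj, rs_snoc; ring.
    - pose proof (hlt (m + j)%nat ltac:(lia)); lra.
    - pose proof (hlt (m + j)%nat ltac:(lia)); lra. }
  destruct (psum_unb (c + rs x 0 m)) as [N hN].
  assert (h1 : rs x 0 (m + N) = rs x 0 m + rs x m N) by (rewrite rs_split; reflexivity).
  assert (h2 : rs x 0 (N + m) = rs x 0 N + rs x N m) by (rewrite rs_split; reflexivity).
  assert (h3 : 0 <= rs x N m) by (apply rs_nonneg; intro; left; auto).
  rewrite Nat.add_comm in h2.
  pose proof (hlt (m + N)%nat ltac:(lia)). rewrite hw in H0.
  pose proof (W_nonneg m). lra.
Qed.

Lemma B_unb j : exists i, (j <= B i)%nat.
Proof.
  induction j. { exists 0%nat; lia. }
  destruct IHj as [i hi].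
  destruct (Nat.le_gt_cases (S j) (B i)) as [h|h]; [eauto|].
  destruct (x_small ((1/2)^j) (half_pos j)) as [N0 HN0].
  destruct (L_high (Nat.max i N0)) as [i' [hi' hw]].
  pose proof (B_mono' i i' ltac:(lia)).
  destruct (Nat.le_gt_cases (S j) (B i')) as [h'|h']; [eauto|].
  exists (S i'). rewrite B_step. destruct (Rlt_dec (W i') c); [lra|].
  assert (e : B i' = j) by lia. rewrite e.
  destruct (Rle_dec (x i') ((1/2)^j)); [lia|].
  pose proof (HN0 i' ltac:(lia)). lra.
Qed.

Lemma L_low m : exists i, (m <= i)%nat /\ W i < c.
Proof.
  apply NNPP; intro H.
  assert (hge : forall i, (m <= i)%nat -> c <= W i).
  { intros i hi. apply Rnot_lt_le. intro h; apply H; eauto. }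
  assert (hA : forall j, A (m + j)%nat = A m).
  { induction j. { rewrite Nat.add_0_r; auto. }
    replace (m + S j)%nat with (S (m + j)) by lia. rewrite A_step.
    destruct (Rlt_dec _ _); auto. pose proof (hge (m + j)%nat ltac:(lia)); lra. }
  destruct (x_small ((1/2)^(A m)) (half_pos _)) as [N0 HN0].
  set (M := Nat.max m N0).
  assert (hB : forall j, (B M + j <= B (M + j))%nat).
  { induction j. { rewrite !Nat.add_0_r; auto. }
    replace (M + S j)%nat with (S (M + j)) by lia. rewrite B_step.
    destruct (Rlt_dec _ _) as [r|r]. { pose proof (hge (M + j)%nat ltac:(lia)); lra. }
    destruct (Rle_dec _ _) as [r2|r2]; [lia|].
    exfalso; apply r2.
    destruct (inv_all (M + j)) as [hi _].
    replace (A (M + j)) with (A m) in hi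
      by (replace (M + j)%nat with (m + (M + j - m))%nat by lia; rewrite hA; auto).
    pose proof (half_decr _ _ hi). pose proof (HN0 (M + j)%nat ltac:(lia)). lra. }
  specialize (hB (S (A m))).
  destruct (inv_all (M + S (A m))) as [hi _].
  replace (A (M + S (A m))) with (A m) in hi
    by (replace (M + S (A m))%nat with (m + (M + S (A m) - m))%nat by lia; rewrite hA; auto).
  lia.
Qed.

Lemma Cl_spec k : isClose (Cl k) /\ B (Cl k) = k.
Proof.
  destruct (B_unb (S k)) as [i hi]. destruct (close_exists i k hi) as [m hm].
  unfold Cl; apply choose_spec; eauto.
Qed.

Lemma Op_spec n k : (k < A n)%nat -> isOpen (Op k) /\ A (Op k) = k.
Proof.
  intro h. destruct (open_exists n k h) as [m hm]. unfold Op; apply choose_spec; eauto.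
Qed.

Lemma sigma_open n : W n < c -> sigma n = Cl (A n).
Proof. intro h; unfold sigma; destruct (Rlt_dec _ _); [auto|lra]. Qed.
Lemma sigma_close n : isClose n -> sigma n = Op (B n).
Proof.
  intros [h1 h2]; unfold sigma; destruct (Rlt_dec _ _); [lra|].
  destruct (Rle_dec _ _); [auto|lra].
Qed.
Lemma sigma_fix n : c <= W n -> (1/2)^(B n) < x n -> sigma n = n.
Proof.
  intros h1 h2; unfold sigma; destruct (Rlt_dec _ _); [lra|].
  destruct (Rle_dec _ _); [lra|auto].
Qed.

Lemma sigma_invol n : sigma (sigma n) = n.
Proof.
  destruct (Rlt_dec (W n) c) as [h|h].
  - rewrite (sigma_open n h). destruct (Cl_spec (A n)) as [hc1 hc2].
    rewrite (sigma_close _ hc1), hc2.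
    assert (hs : isOpen (Op (A n)) /\ A (Op (A n)) = A n)
      by (unfold Op; apply choose_spec; exists n; split; auto).
    apply open_unique; tauto.
  - destruct (Rle_dec (x n) ((1/2)^(B n))) as [h2|h2].
    + assert (hcl : isClose n) by (split; lra).
      rewrite (sigma_close n hcl).
      destruct (Op_spec n (B n) (close_BA n hcl)) as [ho1 ho2].
      rewrite (sigma_open _ ho1), ho2.
      destruct (Cl_spec (B n)) as [hc1 hc2].
      apply close_unique; auto.
    + assert (hf : sigma n = n) by (apply sigma_fix; lra). rewrite hf, hf; reflexivity.
Qed.

Lemma sigma_perm : (forall m n, sigma m = sigma n -> m = n) /\ (forall k, exists n, sigma n = k).
Proof.
  split.
  - intros m n e. rewrite <- (sigma_invol m), <- (sigma_invol n), e; auto.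
  - intro k. exists (sigma k). apply sigma_invol.
Qed.

Definition E m := rs (fun k => x (Op k) - x (Cl k)) (B m) (A m - B m).

Lemma E_step n : E (S n) = E n + (x n - x (sigma n)).
Proof.
  destruct (inv_all n) as [hBA _].
  unfold E.
  destruct (step_spec n) as [[s1 [s2 [s3 [s4 s5]]]]|[[s1 [s2 [s3 [s4 [s5 s6]]]]]|[s1 [s2 [s3 [s4 [s5 s6]]]]]]].
  - rewrite s2, s3. replace (S (A n) - B n)%nat with (S (A n - B n)) by lia.
    rewrite rs_snoc. replace (B n + (A n - B n))%nat with (A n) by lia.
    rewrite (sigma_open n s1).
    assert (hs : isOpen (Op (A n)) /\ A (Op (A n)) = A n)
      by (unfold Op; apply choose_spec; exists n; split; auto).
    assert (e : Op (A n) = n) by (apply open_unique; tauto). rewrite e. ring.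
  - assert (hcl : isClose n) by (split; auto).
    pose proof (close_BA n hcl).
    rewrite s3, s4. replace (A n - B n)%nat with (S (A n - S (B n))) by lia.
    simpl. rewrite (sigma_close n hcl).
    destruct (Cl_spec (B n)) as [hc1 hc2].
    assert (e : Cl (B n) = n) by (apply close_unique; auto). rewrite e. ring.
  - rewrite s3, s4, (sigma_fix n s1 s2). ring.
Qed.

Lemma D_eq N : sum_f_R0 (fun i => x i - x (sigma i)) N = E (S N).
Proof.
  induction N.
  - simpl. rewrite E_step. unfold E, A, B; simpl. ring.
  - simpl. rewrite IHN, (E_step (S N)). reflexivity.
Qed.

Definition T m := rs (fun k => x (Cl k)) (B m) (A m - B m).

Lemma E_WT m : E m = W m - T m.
Proof.
  unfold E, T. rewrite rs_minus. f_equal.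
  destruct (inv_all m) as [hBA [hW _]]. rewrite hW. apply rs_ext.
  intros i hi. rewrite (op_Op m i); auto. lia.
Qed.

Lemma T_bound m : 0 <= T m <= 2 * (1/2)^(B m).
Proof.
  split.
  - apply rs_nonneg; intro; left; auto.
  - eapply Rle_trans; [|apply rs_geom]. apply rs_le. intro k.
    destruct (Cl_spec k) as [[_ h] e]. rewrite e in h; auto.
Qed.

Lemma Op_ge n k : (k < A n)%nat -> (k <= Op k)%nat.
Proof.
  intro h. destruct (Op_spec n k h) as [_ e]. pose proof (A_le (Op k)). lia.
Qed.

Lemma crossing d : forall i, W i < c -> c <= W (i + d)%nat ->
  exists k, (i <= k)%nat /\ W k < c /\ c <= W (S k).
Proof.
  induction d; intros i h1 h2. { rewrite Nat.add_0_r in h2; lra. }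
  destruct (Rlt_dec (W (S i)) c) as [r|r].
  - destruct (IHd (S i) r) as [k hk]. { replace (S i + d)%nat with (i + S d)%nat by lia; auto. }
    exists k; split; [lia|tauto].
  - exists i; split; [lia|]. split; auto; lra.
Qed.

Lemma Wband e : 0 < e -> exists N, forall n, (N <= n)%nat -> c - e <= W n <= c + e.
Proof.
  intro he. destruct (x_small e he) as [M HM].
  destruct (B_unb M) as [n0 hn0].
  destruct (L_low (Nat.max n0 M)) as [i [hi1 hi2]].
  destruct (L_high i) as [i' [hi'1 hi'2]].
  replace i' with (i + (i' - i))%nat in hi'2 by lia.
  destruct (crossing _ i hi2 hi'2) as [k [hk1 [hk2 hk3]]].
  assert (hstart : c - e <= W (S k) <= c + e).
  { destruct (step_spec k) as [[_ [_ [_ [s4 _]]]]|[[s1 _]|[s1 _]]]; try lra.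
    pose proof (HM k ltac:(lia)). lra. }
  exists (S k). intros n hn. replace n with (S k + (n - S k))%nat by lia.
  generalize (n - S k)%nat as j. induction j. { rewrite Nat.add_0_r; auto. }
  replace (S k + S j)%nat with (S (S k + j)) by lia. set (m := (S k + j)%nat) in *.
  destruct (step_spec m) as [[s1 [s2 [s3 [s4 s5]]]]|[[s1 [s2 [s3 [s4 [s5 s6]]]]]|[s1 [s2 [s3 [s4 [s5 s6]]]]]]].
  - rewrite s4. pose proof (HM m ltac:(unfold m; lia)). pose proof (hpos m). lra.
  - rewrite s5. assert (hcl : isClose m) by (split; auto).
    pose proof (close_BA m hcl).
    rewrite (op_Op m (B m)) by auto.
    pose proof (Op_ge m (B m) H).
    pose proof (B_mono' n0 m ltac:(unfold m; lia)).
    pose proof (HM (Op (B m)) ltac:(lia)). pose proof (hpos (Op (B m))). lra.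
  - rewrite s5; auto.
Qed.

Lemma main_conv : Un_cv (fun N => sum_f_R0 (fun n => x n - x (sigma n)) N) c.
Proof.
  intros eps heps.
  destruct (Wband (eps/4) ltac:(lra)) as [N1 HN1].
  destruct (pow_lt_1_zero (1/2) ltac:(rewrite Rabs_right; lra) (eps/8) ltac:(lra)) as [k0 Hk0].
  specialize (Hk0 k0 (le_n _)). rewrite Rabs_right in Hk0 by (left; apply half_pos).
  destruct (B_unb k0) as [n2 hn2].
  exists (Nat.max N1 n2). intros n hn.
  rewrite D_eq, E_WT. unfold Rdist.
  pose proof (HN1 (S n) ltac:(lia)). pose proof (T_bound (S n)).
  pose proof (half_decr _ _ (Nat.le_trans _ _ _ hn2 (B_mono' n2 (S n) ltac:(lia)))).
  apply Rabs_def1; lra.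
Qed.

End Constr.

Theorem mainTheorem3 (x : nat -> R)
  (hpos : forall n, 0 < x n)
  (hdiv : ~ exists l : R, Un_cv (fun N => sum_f_R0 x N) l)
  (hlim : Un_cv x 0) :
  forall c : R, 0 <= c ->
  exists s : nat -> nat, is_perm s /\
    Un_cv (fun N => sum_f_R0 (fun n => x n - x (s n)) N) c.
Proof.
  intros c hc0. destruct (Rle_lt_or_eq_dec 0 c hc0) as [hc|hc].
  - exists (sigma x c). split.
    + unfold is_perm. apply (sigma_perm x c hpos hc hlim hdiv).
    + apply (main_conv x c hpos hc hlim hdiv).
  - subst c. exists (fun n => n). split.
    + split; [auto|]. intro k; exists k; auto.
    + intros eps heps. exists 0%nat. intros n _.
      assert (h0 : sum_f_R0 (fun n => x n - x n) n = 0).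
      { induction n; simpl; [ring|]. rewrite IHn; ring. }
      rewrite h0. unfold Rdist. rewrite Rminus_0_r, Rabs_R0. lra.
Qed.
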